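(* Let $G$ be a simple graph and $v_0\in V(G)$ with $N_G(v_0)=\{u_1,u_2\}$ ($u_1\ne u_2$). (i) Suppose $u_1u_2\in E(G)$, let $G'=G-u_1u_2-v_0$ and $g\in\mathrm{SEDF}^0(G')$. Define $f:E(G)\to\{1,-1\}$ by $f(e)=g(e)$ for $e\in E(G')$, $f(v_0u_i)=1$ for $i=1,2$, and $f(u_1u_2)=-1$. Then $f\in\mathrm{SEDF}^0(G)$ and $f(G)=g(G')+1$. (ii) Suppose $u_1u_2\notin E(G)$, let $G'=G+u_1u_2-v_0$ and $g\in\mathrm{SEDF}^0(G')$. Define $f:E(G)\to\{1,-1\}$ by $f(e)=g(e)$ for $e\in E(G')\setminus\{u_1u_2\}$, $f(u_1v_0)=1$, and $f(u_2v_0)=g(u_1u_2)$. Then $f\in\mathrm{SEDF}^0(G)$ and $f(G)=g(G')+1$.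
   Context: For a graph $H$ and $f:E(H)\to\{1,-1\}$, $f(H)=\sum_{e\in E(H)}f(e)$ and $f(v)=\sum_{e\in E_H(v)}f(e)$, where $E_H(v)$ is the set of edges of $H$ incident with $v$. $\mathrm{SEDF}^0(H)$ is the set of functions $f:E(H)\to\{1,-1\}$ such that (a) $f(v)\ge 0$ for all $v\in V(H)$, and (b) $f(u)+f(v)\ge 2$ for every edge $uv$ with $f(uv)=1$. $G-u_1u_2-v_0$ is obtained by deleting the edge $u_1u_2$ and the vertex $v_0$; $G+u_1u_2-v_0$ by adding the edge $u_1u_2$ and deleting $v_0$. *)

(* Defs.v *)
From mathcomp Require Import all_boot all_order all_algebra.
Set Implicit Arguments. Unset Strict Implicit. Unset Printing Implicit Defensive.
Import Order.TTheory GRing.Theory Num.Theory.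
Local Open Scope ring_scope.

Definition simple_graph (T : finType) (V : {set T}) (E : {set {set T}}) : Prop :=
  forall e, e \in E -> e \subset V /\ #|e| = 2%N.

Definition fsum (T : finType) (E : {set {set T}}) (f : {set T} -> int) : int :=
  \sum_(e in E) f e.

Definition fvert (T : finType) (E : {set {set T}}) (f : {set T} -> int) (v : T) : int :=
  \sum_(e in E | v \in e) f e.

Definition SEDF0 (T : finType) (V : {set T}) (E : {set {set T}}) (f : {set T} -> int) : Prop :=
  [/\ (forall e, e \in E -> f e = 1 \/ f e = -1),
      (forall v, v \in V -> 0 <= fvert E f v) &
      (forall u v, [set u; v] \in E -> u != v -> f [set u; v] = 1 ->
                   2 <= fvert E f u + fvert E f v)].

Definition nbhd (T : finType) (E : {set {set T}}) (v : T) : {set T} :=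
  [set u | [set v; u] \in E].

(* Main.v *)
Require Import Defs.
From mathcomp Require Import all_boot all_order all_algebra.
From mathcomp Require Import zify.
Import Order.TTheory GRing.Theory Num.Theory.
Local Open Scope ring_scope.

Lemma fvertU1 (T : finType) (A : {set {set T}}) a (f : {set T} -> int) v :
  a \notin A -> fvert (a |: A) f v = (if v \in a then f a else 0) + fvert A f v.
Proof.
move=> aA; rewrite /fvert big_mkcondr big_setU1 //=; congr (_ + _).
by rewrite -big_mkcondr.
Qed.

Lemma fvert_eq (T : finType) (A : {set {set T}}) (f g : {set T} -> int) v :
  {in A, f =1 g} -> fvert A f v = fvert A g v.
Proof. by move=> fg; apply: eq_bigr => e /andP[eA _]; exact: fg. Qed.

Lemma fvert_notin (T : finType) (A : {set {set T}}) (f : {set T} -> int) v :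
  (forall e, e \in A -> v \notin e) -> fvert A f v = 0.
Proof.
move=> H; rewrite /fvert big_pred0 // => e.
by case eA: (e \in A) => //=; apply/negbTE/H.
Qed.

Lemma fsumU1 (T : finType) (A : {set {set T}}) a (f : {set T} -> int) :
  a \notin A -> fsum (a |: A) f = f a + fsum A f.
Proof. by move=> aA; rewrite /fsum big_setU1. Qed.

Lemma fsum_eq (T : finType) (A : {set {set T}}) (f g : {set T} -> int) :
  {in A, f =1 g} -> fsum A f = fsum A g.
Proof. by move=> fg; apply: eq_bigr => e eA; exact: fg. Qed.

Ltac clia := repeat match goal with H : _ |- _ => clear H end; lia.

Theorem lemma2p3 (T : finType) (V : {set T}) (E : {set {set T}})
  (v0 u1 u2 : T) :
  simple_graph V E -> v0 \in V ->
  u1 != u2 -> nbhd E v0 = [set u1; u2] ->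
  (* (i) *)
  ([set u1; u2] \in E ->
   forall g : {set T} -> int,
   let V' := V :\ v0 in
   let E' := [set e in E | v0 \notin e] :\ [set u1; u2] in
   SEDF0 V' E' g ->
   let f := fun e : {set T} =>
     if (e == [set v0; u1]) || (e == [set v0; u2]) then 1
     else if e == [set u1; u2] then -1 else g e in
   SEDF0 V E f /\ fsum E f = fsum E' g + 1) /\
  (* (ii) *)
  ([set u1; u2] \notin E ->
   forall g : {set T} -> int,
   let V' := V :\ v0 in
   let E' := [set e in E | v0 \notin e] :|: [set [set u1; u2]] in
   SEDF0 V' E' g ->
   let f := fun e : {set T} =>
     if e == [set u1; v0] then 1
     else if e == [set u2; v0] then g [set u1; u2] else g e in
   SEDF0 V E f /\ fsum E f = fsum E' g + 1).
Proof.
move=> sg v0V u12 Hn.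
have e1E : [set v0; u1] \in E by have := set21 u1 u2; rewrite -Hn inE.
have e2E : [set v0; u2] \in E by have := set22 u1 u2; rewrite -Hn inE.
have u1v0 : u1 != v0.
  apply/eqP => h; have [_] := sg _ e1E; rewrite h setUid cards1; clia.
have u2v0 : u2 != v0.
  apply/eqP => h; have [_] := sg _ e2E; rewrite h setUid cards1; clia.
have u1V : u1 \in V by have [/subsetP s _] := sg _ e1E; apply: s; rewrite set22.
have u2V : u2 \in V by have [/subsetP s _] := sg _ e2E; apply: s; rewrite set22.
set E0 := [set e in E | v0 \notin e].
have HE : E = [set v0; u1] |: ([set v0; u2] |: E0).
  apply/setP => e; rewrite !in_setU1 /E0 inE.
  case eE: (e \in E); last first.
    apply/esym/negbTE; rewrite andFb orbF; apply/norP; split; apply/eqP => h;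
      by rewrite h ?e1E ?e2E in eE.
  rewrite andTb; case v0e: (v0 \in e); last by rewrite !orbT.
  rewrite orbF; have [_ /eqP/cards2P [x [y [xy exy]]]] := sg _ eE.
  move: v0e; rewrite exy in_set2 => /orP[] /eqP h.
    have : y \in nbhd E v0 by rewrite inE h -exy.
    by rewrite Hn in_set2 -h => /orP[]/eqP ->; rewrite eqxx ?orbT.
  have : x \in nbhd E v0 by rewrite inE h setUC -exy.
  rewrite Hn in_set2 -h => /orP[]/eqP ->; rewrite setUC eqxx ?orbT //.
have n1 : [set v0; u1] \notin [set v0; u2] |: E0.
  rewrite in_setU1 negb_or; apply/andP; split; last by rewrite /E0 inE set21 andbF.
  apply/eqP => h; have: u1 \in [set v0; u1] by rewrite set22.
  by rewrite h in_set2 (negbTE u1v0) (negbTE u12).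
have n2 : [set v0; u2] \notin E0 by rewrite /E0 inE set21 andbF.
have fvE : forall h v, fvert E h v = (if v \in [set v0; u1] then h [set v0; u1] else 0)
   + (if v \in [set v0; u2] then h [set v0; u2] else 0) + fvert E0 h v.
  by move=> h v; rewrite HE fvertU1 // fvertU1 // addrA.
have fsE : forall h, fsum E h = h [set v0; u1] + h [set v0; u2] + fsum E0 h.
  by move=> h; rewrite HE fsumU1 // fsumU1 // addrA.
have fv0 : forall h, fvert E0 h v0 = 0.
  by move=> h; apply: fvert_notin => e; rewrite /E0 inE => /andP[].
have v0u : v0 \notin [set u1; u2].
  by rewrite in_set2 negb_or eq_sym u1v0 eq_sym u2v0.
split.
- move=> u12E g V' E' [g1 g2 g3] f.
  have u12E0 : [set u1; u2] \in E0 by rewrite /E0 inE u12E v0u.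
  have HE0 : E0 = [set u1; u2] |: E' by rewrite /E' setD1K.
  have n12 : [set u1; u2] \notin E' by rewrite /E' in_setD1 eqxx.
  have fg : {in E', f =1 g}.
    move=> e; rewrite /E' in_setD1 => /andP[ne]; rewrite /E0 inE => /andP[_ v0e].
    have ne1 : e != [set v0; u1] by apply/eqP => h; move: v0e; rewrite h set21.
    have ne2 : e != [set v0; u2] by apply/eqP => h; move: v0e; rewrite h set21.
    by rewrite /f (negbTE ne1) (negbTE ne2) (negbTE ne).
  have fe1 : f [set v0; u1] = 1 by rewrite /f eqxx.
  have fe2 : f [set v0; u2] = 1 by rewrite /f eqxx orbT.
  have fu : f [set u1; u2] = -1.
    rewrite /f; case: ifP => [/orP[]/eqP h|_]; last by rewrite eqxx.
      by move: v0u; rewrite h set21.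
    by move: v0u; rewrite h set21.
  have key : forall x, x != v0 -> fvert E f x = fvert E' g x.
    move=> x xv0; rewrite fvE HE0 fvertU1 // (@fvert_eq _ _ _ _ x fg) fe1 fe2 fu
      !in_set2 (negbTE xv0) !orFb.
    case: eqP => [->|_]; first by rewrite (negbTE u12) orbF /=; clia.
    by case: eqP => _ /=; clia.
  have fvv0 : fvert E f v0 = 2 by rewrite fvE fv0 !set21 fe1 fe2.
  have fpos : forall x, x \in V -> 0 <= fvert E f x.
    move=> x xV; case: (x =P v0) => [->|/eqP xv0]; first by rewrite fvv0.
    by rewrite key //; apply: g2; rewrite /V' in_setD1 xv0 xV.
  split; first split.
  + move=> e eE; rewrite /f; case: ifP => [_|/norP[n1' n2']]; first by left.
    case: ifP => ne12; first by right.
    apply: g1; move: eE; rewrite HE !in_setU1 (negbTE n1') (negbTE n2') /= => eE0.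
    by rewrite /E' in_setD1 ne12.
  + exact: fpos.
  + move=> u v uvE uv fuv.
    have [/subsetP sV _] := sg _ uvE.
    have uV : u \in V by apply: sV; rewrite set21.
    have vV : v \in V by apply: sV; rewrite set22.
    case: (boolP (v0 \in [set u; v])) => [|v0uv].
      rewrite in_set2 => /orP[]/eqP h.
        by rewrite -h fvv0; have := fpos v vV; clia.
      by rewrite -h fvv0; have := fpos u uV; clia.
    have uvE0 : [set u; v] \in E0 by rewrite /E0 inE uvE.
    case: (eqVneq [set u; v] [set u1; u2]) => [h|ne].
      by move: fuv; rewrite h fu; clia.
    have uvE' : [set u; v] \in E' by rewrite /E' in_setD1 ne uvE0.
    have uv0 : u != v0 by apply/eqP => h; move: v0uv; rewrite -h set21.
    have vv0 : v != v0 by apply/eqP => h; move: v0uv; rewrite -h set22.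
    rewrite !key //; apply: g3 => //; by rewrite -(fg _ uvE').
  + by rewrite fsE HE0 fsumU1 // (@fsum_eq _ _ _ _ fg) fe1 fe2 fu; clia.
- move=> u12n g V' E' [g1 g2 g3] f.
  have HE' : E' = [set u1; u2] |: E0 by rewrite /E' setUC.
  have n12 : [set u1; u2] \notin E0 by rewrite /E0 inE (negbTE u12n).
  have u12E' : [set u1; u2] \in E' by rewrite HE' setU11.
  have ha := g1 _ u12E'.
  have ha1 : -1 <= g [set u1; u2] by case: ha => ->.
  have ha2 : g [set u1; u2] <= 1 by case: ha => ->.
  have s1 : [set v0; u1] = [set u1; v0] by rewrite setUC.
  have s2 : [set v0; u2] = [set u2; v0] by rewrite setUC.
  have fg : {in E0, f =1 g}.
    move=> e; rewrite /E0 inE => /andP[_ v0e].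
    have ne1 : e != [set u1; v0] by apply/eqP => h; move: v0e; rewrite h set22.
    have ne2 : e != [set u2; v0] by apply/eqP => h; move: v0e; rewrite h set22.
    by rewrite /f (negbTE ne1) (negbTE ne2).
  have fe1 : f [set v0; u1] = 1 by rewrite /f s1 eqxx.
  have fe2 : f [set v0; u2] = g [set u1; u2].
    rewrite /f s2 ifF ?eqxx //; apply/eqP => h.
    have : u2 \in [set u1; v0] by rewrite -h set21.
    rewrite in_set2 (negbTE u2v0) orbF => /eqP h'.
    by rewrite h' eqxx in u12.
  have key2 : forall x, x != v0 -> fvert E f x =
      fvert E' g x + (if x == u1 then 1 - g [set u1; u2] else 0).
    move=> x xv0; rewrite fvE HE' fvertU1 // (@fvert_eq _ _ _ _ x fg) fe1 fe2
      !in_set2 (negbTE xv0) !orFb.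
    case: eqP => [->|_]; first by rewrite (negbTE u12) orbF /=; clia.
    by case: eqP => _ /=; clia.
  have fvv0 : fvert E f v0 = 1 + g [set u1; u2] by rewrite fvE fv0 !set21 fe1 fe2 addr0.
  have gpos : forall x, x \in V -> x != v0 -> 0 <= fvert E' g x.
    by move=> x xV xv0; apply: g2; rewrite /V' in_setD1 xv0 xV.
  have kle : forall x, x != v0 -> fvert E' g x <= fvert E f x.
    by move=> x xv0; rewrite key2 //; case: (x == u1); move: ha1 ha2; clia.
  have fpos : forall x, x \in V -> 0 <= fvert E f x.
    move=> x xV; case: (x =P v0) => [->|/eqP xv0]; first by rewrite fvv0; move: ha1; clia.
    by have := kle x xv0; have := gpos x xV xv0; clia.
  have claim : forall w, [set v0; w] \in E -> w != v0 -> f [set v0; w] = 1 ->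
      2 <= fvert E f v0 + fvert E f w.
    move=> w wE; have : w \in nbhd E v0 by rewrite inE.
    rewrite Hn in_set2 => /orP[]/eqP -> wv0 fw.
      by rewrite fvv0 key2 // eqxx; have := gpos u1 u1V u1v0; clia.
    by move: fw; rewrite fe2 fvv0 => ->; have := fpos u2 u2V; clia.
  split; first split.
  + move=> e eE; rewrite /f; case: ifP => [_|n1']; first by left.
    case: ifP => [_|n2']; first exact: g1.
    apply: g1; move: eE; rewrite HE !in_setU1 s1 s2 n1' n2' /= => eE0.
    by rewrite HE' in_setU1 eE0 orbT.
  + exact: fpos.
  + move=> u v uvE uv fuv.
    case: (boolP (v0 \in [set u; v])) => [|v0uv].
      rewrite in_set2 => /orP[]/eqP h.
        by rewrite -h in uvE fuv uv *; apply: claim => //; rewrite eq_sym.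
      move: uvE fuv uv; rewrite -h => uvE fuv uv.
      rewrite addrC; rewrite setUC in uvE; rewrite setUC in fuv.
      by apply: claim.
    have uvE0 : [set u; v] \in E0 by rewrite /E0 inE uvE.
    have uvE' : [set u; v] \in E' by rewrite HE' in_setU1 uvE0 orbT.
    have uv0 : u != v0 by apply/eqP => h; move: v0uv; rewrite -h set21.
    have vv0 : v != v0 by apply/eqP => h; move: v0uv; rewrite -h set22.
    have := g3 u v uvE' uv; rewrite -(fg _ uvE0) => /(_ fuv).
    by have := kle u uv0; have := kle v vv0; clia.
  + by rewrite fsE HE' fsumU1 // (@fsum_eq _ _ _ _ fg) fe1 fe2; clia.
Qed.
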